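(* Let $X$ be a non-empty finite set and $\mathcal{P}$ a partition of $X$ such that $\mathcal{P}$ has exactly $m_i\ge 2$ blocks of size $n_i\ge 2$ for $i=1,\dots,p$ (the $n_i$ pairwise distinct), exactly one block of each of the sizes $l_1,\dots,l_q$ with each $l_i\ge 2$ (these sizes distinct from each other and from the $n_i$), and $t$ singleton blocks, and no other blocks ($p,q,t$ may be $0$). Then $$\operatorname{rank}(T(X,\mathcal{P}):\Sigma(X,\mathcal{P}))=\binom{p+q}{2}+p+h(p,q,t),$$ where $h(p,q,0)=0$, $h(p,q,1)=p+q$ and $h(p,q,t)=p+q+1$ for $t\ge 2$.
   Context: $T(X,\mathcal{P})$ is the semigroup (under composition) of maps $f:X\to X$ such that for every block $P$ of $\mathcal{P}$ there is a block $Q$ with $Pf\subseteq Q$; $\Sigma(X,\mathcal{P})$ is the subsemigroup of those $f\in T(X,\mathcal{P})$ whose image intersects every block of $\mathcal{P}$. For a subsemigroup $U$ of a semigroup $V$, the relative rank $\operatorname{rank}(V:U)$ is the least cardinality of a subset $W\subseteq V$ such that $U\cup W$ generates $V$ as a semigroup. *)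

(* Defs.v *)
From mathcomp Require Import all_boot.
Set Implicit Arguments. Unset Strict Implicit. Unset Printing Implicit Defensive.

(* Maps X -> X as finite functions; composition "f then g" (right action xfg). *)
Definition fcomp (X : finType) (f g : {ffun X -> X}) : {ffun X -> X} :=
  [ffun x => g (f x)].

Definition seqprod (X : finType) (f : {ffun X -> X}) (s : seq {ffun X -> X}) :=
  foldl (@fcomp X) f s.

Definition gen_sg (X : finType) (S : {set {ffun X -> X}}) : {ffun X -> X} -> Prop :=
  fun g => exists (f : {ffun X -> X}) (s : seq {ffun X -> X}),
      f \in S /\ all (fun h => h \in S) s /\ g = seqprod f s.

Definition Tpart (X : finType) (P : {set {set X}}) : {set {ffun X -> X}} :=
  [set f : {ffun X -> X} | [forall B in P, [exists C in P, f @: B \subset C]]].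

Definition Sigpart (X : finType) (P : {set {set X}}) : {set {ffun X -> X}} :=
  [set f in Tpart P | [forall B in P, [exists x, f x \in B]]].

Definition generates (X : finType) (V U W : {set {ffun X -> X}}) : Prop :=
  forall g, gen_sg (U :|: W) g <-> g \in V.

Definition relative_rank_is (X : finType) (V U : {set {ffun X -> X}}) (r : nat) : Prop :=
  (exists W : {set {ffun X -> X}}, W \subset V /\ generates V U W /\ #|W| = r) /\
  (forall W : {set {ffun X -> X}}, W \subset V -> generates V U W -> r <= #|W|).

Definition hfun (p q t : nat) : nat :=
  match t with 0 => 0 | 1 => p + q | _ => (p + q).+1 end.

Definition nblocks (X : finType) (P : {set {set X}}) (k : nat) : nat :=
  #|[set B in P | #|B| == k]|.

(* Main.v *)
Require Import Defs.
From mathcomp Require Import all_boot all_fingroup.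
From Stdlib Require Import ClassicalEpsilon.
From mathcomp Require Import zify.
Set Implicit Arguments. Unset Strict Implicit. Unset Printing Implicit Defensive.


Lemma fcompE (X : finType) (f g : {ffun X -> X}) x : fcomp f g x = g (f x).
Proof. by rewrite /fcomp ffunE. Qed.

Section Basics.
Variable X : finType.
Variable P : {set {set X}}.
Hypothesis hP : partition P [set: X].

Definition bl (x : X) := pblock P x.

Lemma triv : trivIset P. Proof. by case/and3P: hP. Qed.
Lemma nonempty0 : set0 \notin P. Proof. by case/and3P: hP. Qed.
Lemma cov x : x \in cover P. Proof. by case/and3P: hP => /eqP -> _ _; rewrite inE. Qed.
Lemma bl_mem x : bl x \in P. Proof. exact: pblock_mem (cov x). Qed.
Lemma mem_bl x : x \in bl x. Proof. by rewrite /bl mem_pblock cov. Qed.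
Lemma bl_eq B x : B \in P -> x \in B -> bl x = B.
Proof. by move=> BP xB; apply: def_pblock triv BP xB. Qed.
Lemma blockP B : B \in P -> exists x, x \in B.
Proof.
move=> BP; case: (set_0Vmem B) => [B0|[x xB]]; last by exists x.
by move: nonempty0; rewrite -B0 BP.
Qed.
Lemma bl_same x y : bl x = bl y -> y \in bl x.
Proof. by move=> ->; apply: mem_bl. Qed.
Lemma in_bl x y : y \in bl x -> bl y = bl x.
Proof. by move=> h; apply: bl_eq (bl_mem x) h. Qed.

Definition inT (f : X -> X) := forall x y, bl x = bl y -> bl (f x) = bl (f y).

Lemma TP (f : {ffun X -> X}) : f \in Tpart P <-> inT f.
Proof.
rewrite inE; split.
- move=> /forallP H x y exy.
  have := H (bl x); rewrite bl_mem /= => /existsP [C /andP [CP sub]].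
  have fx : f x \in C by apply: (subsetP sub); apply: imset_f; apply: mem_bl.
  have fy : f y \in C by apply: (subsetP sub); apply: imset_f; rewrite exy mem_bl.
  by rewrite (bl_eq CP fx) (bl_eq CP fy).
- move=> H; apply/forallP => B; apply/implyP => BP.
  have [x xB] := blockP BP.
  apply/existsP; exists (bl (f x)); rewrite bl_mem /=.
  apply/subsetP => z /imsetP [y yB ->].
  apply: bl_same; apply: H.
  by rewrite (bl_eq BP yB) (bl_eq BP xB).
Qed.

Definition surjB (f : X -> X) := forall B, B \in P -> exists x, f x \in B.

Lemma SP (f : {ffun X -> X}) : f \in Sigpart P <-> inT f /\ surjB f.
Proof.
rewrite inE; split.
- case/andP => /TP H /forallP H2; split => // B BP.
  by move: (H2 B); rewrite BP /= => /existsP.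
- case=> H1 H2; apply/andP; split; first by apply/TP.
  apply/forallP => B; apply/implyP => BP; apply/existsP; exact: H2.
Qed.

Lemma inT_comp (f g : {ffun X -> X}) : inT f -> inT g -> inT (fcomp f g).
Proof. by move=> hf hg x y e; rewrite !fcompE; apply: hg; apply: hf. Qed.

Lemma surjB_comp (f g : {ffun X -> X}) : inT g -> surjB f -> surjB g -> surjB (fcomp f g).
Proof.
move=> Tg sf sg B BP; have [y gy] := sg B BP.
have [x fx] := sf (bl y) (bl_mem y).
exists x; rewrite fcompE.
rewrite -(bl_eq BP gy); apply: bl_same; apply: Tg.
by rewrite (in_bl fx).
Qed.

Definition idf : {ffun X -> X} := [ffun x => x].

Lemma idS : idf \in Sigpart P.
Proof.
apply/SP; split; first by move=> x y; rewrite !ffunE.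
by move=> B BP; have [x xB] := blockP BP; exists x; rewrite ffunE.
Qed.

Lemma idT : idf \in Tpart P.
Proof. by move: idS; rewrite inE => /andP []. Qed.

Lemma TcompP (f g : {ffun X -> X}) : f \in Tpart P -> g \in Tpart P -> fcomp f g \in Tpart P.
Proof. by move=> /TP hf /TP hg; apply/TP; apply: inT_comp. Qed.

Lemma ScompP (f g : {ffun X -> X}) : f \in Sigpart P -> g \in Sigpart P -> fcomp f g \in Sigpart P.
Proof.
move=> /SP [hf sf] /SP [hg sg]; apply/SP; split; first exact: inT_comp.
exact: surjB_comp.
Qed.

End Basics.


Section Gen.
Variable X : finType.
Implicit Types f g a b : {ffun X -> X}.

Lemma fcompA f g h : fcomp (fcomp f g) h = fcomp f (fcomp g h).
Proof. by apply/ffunP => x; rewrite !fcompE. Qed.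

Lemma foldl_fcomp a b l : foldl (@fcomp X) (fcomp a b) l = fcomp a (foldl (@fcomp X) b l).
Proof. by elim: l a b => [|c l IH] a b //=; rewrite fcompA IH. Qed.

Lemma gen_comp (S : {set {ffun X -> X}}) f g :
  gen_sg S f -> gen_sg S g -> gen_sg S (fcomp f g).
Proof.
move=> [f0 [s [f0S [sS ->]]]] [g0 [s' [g0S [s'S ->]]]].
exists f0, (s ++ g0 :: s'); split => //; split.
  by rewrite all_cat sS /= g0S.
by rewrite /seqprod foldl_cat /= foldl_fcomp.
Qed.

Lemma gen_base (S : {set {ffun X -> X}}) f : f \in S -> gen_sg S f.
Proof. by move=> fS; exists f, [::]. Qed.

Lemma gen_sub (S : {set {ffun X -> X}}) (V : {set {ffun X -> X}}) g :
  (forall f, f \in S -> f \in V) ->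
  (forall f g, f \in V -> g \in V -> fcomp f g \in V) ->
  gen_sg S g -> g \in V.
Proof.
move=> SV cV [f [s [fS [sS ->]]]]; rewrite /seqprod.
have fV := SV _ fS; elim: s f fV {fS} sS => [|a s IH] f fV //=.
case/andP => aS sS; apply: IH => //.
exact: cV fV (SV _ aS).
Qed.

Lemma first_out (Sg W : {set {ffun X -> X}}) (l : seq {ffun X -> X}) a :
  (forall f g, f \in Sg -> g \in Sg -> fcomp f g \in Sg) ->
  a \in Sg -> all (fun h => h \in Sg :|: W) l ->
  foldl (@fcomp X) a l \notin Sg ->
  exists u w l2, [/\ u \in Sg, w \in W, w \notin Sg, all (fun h => h \in Sg :|: W) l2 &
     foldl (@fcomp X) a l = foldl (@fcomp X) (fcomp u w) l2].
Proof.
move=> cS; elim: l a => [|h l IH] a aS //=; first by rewrite aS.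
case/andP => hSW lS nS.
case: (boolP (h \in Sg)) => hS.
  exact: IH (cS _ _ aS hS) lS nS.
exists a, h, l; split => //.
by move: hSW; rewrite inE (negbTE hS).
Qed.

End Gen.


Lemma inj_exists (T U : finType) (A : {set T}) (B : {set U}) (u0 : U) :
  #|A| <= #|B| ->
  exists i : T -> U, {in A &, injective i} /\ forall x, x \in A -> i x \in B.
Proof.
move=> le; exists (fun x => nth u0 (enum B) (index x (enum A))).
have lt x : x \in A -> index x (enum A) < size (enum B).
  move=> xA; apply: leq_trans (_ : size (enum A) <= _); first by rewrite index_mem mem_enum.
  by rewrite -!cardE.
split.
- move=> x y xA yA /eqP; rewrite nth_uniq ?lt ?enum_uniq // => /eqP e.
  by rewrite -(nth_index x (_ : x \in enum A)) ?mem_enum // e nth_index ?mem_enum.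
- by move=> x xA; rewrite -mem_enum mem_nth ?lt.
Qed.

Section Blocks.
Variable X : finType.
Variable P : {set {set X}}.
Hypothesis hP : partition P [set: X].
Local Notation bl := (bl P).
Local Notation inT := (inT P).
Local Notation surjB := (surjB P).

Definition bm (f : X -> X) (B : {set X}) :=
  if [pick x in B] is Some x then bl (f x) else B.

Lemma bmE f B x : inT f -> B \in P -> x \in B -> bm f B = bl (f x).
Proof.
move=> Tf BP xB; rewrite /bm; case: pickP => [y yB|/(_ x)]; last by rewrite xB.
apply: Tf; by rewrite (bl_eq hP BP xB) (bl_eq hP BP yB).
Qed.

Lemma bm_bl f x : inT f -> bm f (bl x) = bl (f x).
Proof. by move=> Tf; apply: bmE => //; [apply: bl_mem | apply: mem_bl]. Qed.

Lemma bm_mem f B : inT f -> B \in P -> bm f B \in P.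
Proof. by move=> Tf BP; have [x xB] := blockP hP BP; rewrite (bmE Tf BP xB) bl_mem. Qed.

Lemma in_bm f B x : inT f -> B \in P -> x \in B -> f x \in bm f B.
Proof. by move=> Tf BP xB; rewrite (bmE Tf BP xB) mem_bl. Qed.

Lemma bm_comp (f g : {ffun X -> X}) B : inT f -> inT g -> B \in P ->
  bm (fcomp f g) B = bm g (bm f B).
Proof.
move=> Tf Tg BP; have [x xB] := blockP hP BP.
rewrite (bmE (inT_comp Tf Tg) BP xB) fcompE (bmE Tf BP xB) bm_bl //.
Qed.

Lemma bm_onto u : inT u -> surjB u -> bm u @: P = P.
Proof.
move=> Tu su; apply/setP => C; apply/idP/idP.
  by case/imsetP => B BP ->; apply: bm_mem.
move=> CP; have [x uxC] := su C CP; apply/imsetP; exists (bl x); first exact: bl_mem.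
by rewrite bm_bl // (bl_eq hP CP uxC).
Qed.

Lemma bm_inj u : inT u -> surjB u -> {in P &, injective (bm u)}.
Proof. by move=> Tu su; apply/imset_injP; rewrite bm_onto. Qed.

Lemma noninj_coll w : inT w -> ~ surjB w ->
  exists F F', [/\ F \in P, F' \in P, F != F' & bm w F = bm w F'].
Proof.
move=> Tw ns.
case: (boolP [exists F in P, exists F' in P, (F != F') && (bm w F == bm w F')]).
  move=> /exists_inP [F FP /exists_inP [F' F'P /andP [ne /eqP e]]].
  by exists F, F'.
move=> /exists_inPn H; exfalso; apply: ns => C CP.
have inj : {in P &, injective (bm w)}.
  move=> F F' FP F'P e; apply/eqP; apply/negPn/negP => ne.
  by move: (H F FP) => /exists_inPn /(_ F' F'P); rewrite ne e eqxx.
have : bm w @: P = P.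
  apply/eqP; rewrite eqEcard (card_in_imset inj) leqnn andbT.
  by apply/subsetP => D /imsetP [F FP ->]; apply: bm_mem.
move/setP/(_ C); rewrite CP => /imsetP [F FP eC].
have [x xF] := blockP hP FP; exists x; rewrite eC; exact: in_bm.
Qed.

Lemma size_pres u : inT u -> surjB u ->
  (forall x y, bl x = bl y -> u x = u y -> x = y) ->
  forall E, E \in P -> #|bm u E| = #|E|.
Proof.
move=> Tu su inj.
have ge E : E \in P -> #|E| <= #|bm u E|.
  move=> EP; have -> : #|E| = #|u @: E|.
    symmetry; apply: card_in_imset => x y xE yE; apply: inj.
    by rewrite (bl_eq hP EP xE) (bl_eq hP EP yE).
  by apply: subset_leq_card; apply/subsetP => z /imsetP [x xE ->]; apply: in_bm.
have sumE : \sum_(E in P) #|bm u E| = \sum_(E in P) #|E|.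
  by rewrite -[in RHS](bm_onto Tu su) big_imset //; apply: bm_inj.
move=> E EP; apply/eqP; rewrite eqn_leq ge // andbT; rewrite leqNgt; apply/negP => lt.
have : \sum_(i in P) #|i| < \sum_(i in P) #|bm u i|.
  rewrite (bigD1 E) // [X in _ < X](bigD1 E) //= -addSn; apply: leq_add => //.
  by apply: leq_sum => F /andP [FP _]; apply: ge.
by rewrite sumE ltnn.
Qed.

End Blocks.


Section Merge.
Variable X : finType.
Variable P : {set {set X}}.
Hypothesis hP : partition P [set: X].
Local Notation bl := (bl P).
Local Notation inT := (inT P).
Local Notation surjB := (surjB P).
Local Notation bm := (bm P).

Definition typ (w : X -> X) a b := exists E1 E2,
  [/\ E1 \in P, E2 \in P, E1 != E2, #|E1| = a & #|E2| = b] /\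
  (bm w E1 = bm w E2 /\ forall E F, E \in P -> F \in P -> E != F -> bm w E = bm w F ->
       (E = E1 /\ F = E2) \/ (E = E2 /\ F = E1)).

Lemma typ_uniq w a b a' b' : typ w a b -> typ w a' b' ->
  (a = a' /\ b = b') \/ (a = b' /\ b = a').
Proof.
move=> [E1 [E2 [[P1 P2 ne <- <-] [e _]]]] [F1 [F2 [[Q1 Q2 _ <- <-] [_ H]]]].
by case: (H _ _ P1 P2 ne e) => [[-> ->]|[-> ->]]; [left|right].
Qed.

Variables (D1 D2 : {set X}) (i : X -> X).
Hypotheses (D1P : D1 \in P) (D2P : D2 \in P) (neD : D1 != D2)
  (iinj : {in D2 &, injective i}) (iD : forall x, x \in D2 -> i x \in D1).

Definition mrg : {ffun X -> X} := [ffun x => if x \in D2 then i x else x].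

Lemma notD2 E x : E \in P -> E != D2 -> x \in E -> x \notin D2.
Proof.
move=> EP ne xE; apply/negP => xD; move: ne.
by rewrite -(bl_eq hP EP xE) (bl_eq hP D2P xD) eqxx.
Qed.

Lemma bl_mrg x : bl (mrg x) = if bl x == D2 then D1 else bl x.
Proof.
rewrite ffunE; case: (boolP (x \in D2)) => xD.
  by rewrite (bl_eq hP D2P xD) eqxx (bl_eq hP D1P (iD xD)).
case: eqP => // e; by move: xD; rewrite -e mem_bl.
Qed.

Lemma mrgT : inT mrg.
Proof. by move=> x y e; rewrite !bl_mrg e. Qed.

Lemma bm_mrg E : E \in P -> bm mrg E = if E == D2 then D1 else E.
Proof.
move=> EP; have [x xE] := blockP hP EP.
by rewrite (bmE hP mrgT EP xE) bl_mrg (bl_eq hP EP xE).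
Qed.

Lemma mrg_injbl x y : bl x = bl y -> mrg x = mrg y -> x = y.
Proof.
move=> e; rewrite !ffunE.
case: (boolP (x \in D2)) => xD; case: (boolP (y \in D2)) => yD //.
- by apply: iinj.
- move: yD; by rewrite -(bl_eq hP D2P xD) e mem_bl.
- move: xD; by rewrite -(bl_eq hP D2P yD) -e mem_bl.
Qed.

Lemma mrg_coll E E' : E \in P -> E' \in P -> E != E' -> bm mrg E = bm mrg E' ->
  (E = D1 /\ E' = D2) \/ (E = D2 /\ E' = D1).
Proof.
move=> EP E'P ne; rewrite !bm_mrg //.
case: (eqVneq E D2) => [eE|nE]; case: (eqVneq E' D2) => [eE'|nE'].
- by move: ne; rewrite eE eE' eqxx.
- by move=> /= e; right; split.
- by move=> /= e; left; split.
- by move=> /= e; move: ne; rewrite e eqxx.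
Qed.

Lemma mrg_notS : ~ surjB mrg.
Proof.
move=> s; have [x h] := s D2 D2P.
move: (bl_eq hP D2P h); rewrite bl_mrg.
case: eqP => [_ e|ne e]; [by move: neD; rewrite e eqxx | by apply: ne].
Qed.

Lemma typ_mrg : typ mrg #|D1| #|D2|.
Proof.
exists D1, D2; split => //; split; first by rewrite !bm_mrg // eqxx (negbTE neD).
by move=> E F EP FP ne e; case: (mrg_coll EP FP ne e) => [[-> ->]|[-> ->]]; [left|right].
Qed.

Lemma LB (W : {set {ffun X -> X}}) :
  W \subset Tpart P -> gen_sg (Sigpart P :|: W) mrg ->
  exists2 w, w \in W & typ w #|D1| #|D2|.
Proof.
move=> WT [f0 [s [f0S [sS efs]]]].
have cS : forall f g, f \in Sigpart P -> g \in Sigpart P -> fcomp f g \in Sigpart P.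
  by move=> f g; apply: ScompP.
have fid : forall f : {ffun X -> X}, fcomp (idf X) f = f.
  by move=> f; apply/ffunP => x; rewrite fcompE ffunE.
have fid' : forall f : {ffun X -> X}, fcomp f (idf X) = f.
  by move=> f; apply/ffunP => x; rewrite fcompE ffunE.
have ml : mrg = foldl (@fcomp X) (idf X) (f0 :: s) by rewrite /= fid efs.
have allS : all (fun h => h \in Sigpart P :|: W) (f0 :: s) by rewrite /= f0S.
have nS : foldl (@fcomp X) (idf X) (f0 :: s) \notin Sigpart P.
  by rewrite -ml; apply/negP => /(SP hP) [_]; apply: mrg_notS.
have [u [w [l2 [uS wW wnS l2S e]]]] := first_out cS (idS hP) allS nS.
rewrite -ml in e.
set v := foldl (@fcomp X) (idf X) l2.
have TSW : forall h, h \in Sigpart P :|: W -> inT h.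
  move=> h; rewrite inE => /orP [/(SP hP) []//|hW]; apply/(TP hP).
  exact: (subsetP WT).
have Tv : inT v.
  have foldT : forall l (a : {ffun X -> X}), all (fun h => h \in Sigpart P :|: W) l -> inT a ->
      inT (foldl (@fcomp X) a l).
    elim=> [|h l IH] a //= /andP [hS lS] Ta.
    by apply: IH => //; apply: inT_comp => //; apply: TSW.
  by apply: foldT => //; apply/(TP hP); apply: idT.
have ef : mrg = fcomp (fcomp u w) v by rewrite e /v -foldl_fcomp fid'.
have [Tu su] := (SP hP u).1 uS.
have Tw : inT w by apply: TSW; rewrite inE wW orbT.
have wns : ~ surjB w by move=> sw; move/negP: wnS; apply; apply/(SP hP).
have uinj : forall x y, bl x = bl y -> u x = u y -> x = y.
  move=> x y exy euy; apply: mrg_injbl => //.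
  by rewrite ef !fcompE euy.
have sz := size_pres hP Tu su uinj.
have binj := bm_inj hP Tu su.
have bon := bm_onto hP Tu su.
have key : forall G G', G \in P -> G' \in P -> G != G' -> bm w G = bm w G' ->
   (G = bm u D1 /\ G' = bm u D2) \/ (G = bm u D2 /\ G' = bm u D1).
  move=> G G' GP G'P ne ew.
  have GP' : G \in bm u @: P by rewrite bon.
  have G'P' : G' \in bm u @: P by rewrite bon.
  move: GP' G'P' => /imsetP [E EP eG] /imsetP [E' E'P eG'].
  subst G G'.
  have neE : E != E' by apply: contraNneq ne => ->.
  have : bm mrg E = bm mrg E'.
    rewrite ef bm_comp //; last exact: inT_comp.
    rewrite bm_comp // ew [RHS]bm_comp //; last exact: inT_comp.
    by rewrite bm_comp.
  by move=> eq; have := mrg_coll EP E'P neE eq; case=> [[h1 h2]|[h1 h2]]; rewrite h1 h2; [left|right]; split.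
have [F [F' [FP F'P neF eF]]] := noninj_coll hP Tw wns.
exists w => //; exists (bm u D1), (bm u D2); split.
  split; rewrite ?sz //; try exact: bm_mem.
  by apply: contra neD => /eqP /binj -> //.
split => //.
by case: (key _ _ FP F'P neF eF) => [[<- <-]|[<- <-]].
Qed.

End Merge.


Section Swap.
Variable X : finType.
Variable P : {set {set X}}.
Hypothesis hP : partition P [set: X].
Local Notation bl := (bl P).
Local Notation inT := (inT P).
Local Notation surjB := (surjB P).

Definition good (a : {perm X}) := forall E, E \in P -> a @: E \in P.

Lemma perm_imsetK (a : {perm X}) (E : {set X}) : a^-1%g @: (a @: E) = E.
Proof.
by rewrite -imset_comp (eq_in_imset (g := id)) ?imset_id // => x _ /=; rewrite permK.
Qed.

Lemma good_onto a : good a -> forall E, E \in P -> exists2 E', E' \in P & E = a @: E'.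
Proof.
move=> ga E EP.
have inj : {in P &, injective (fun F : {set X} => a @: F)}.
  by move=> A B _ _; apply: (imset_inj (@perm_inj _ a)).
have : (fun F : {set X} => a @: F) @: P = P.
  apply/eqP; rewrite eqEcard (card_in_imset inj) leqnn andbT.
  by apply/subsetP => F /imsetP [E' E'P ->]; apply: ga.
by move/setP/(_ E); rewrite EP => /imsetP [E' E'P ->]; exists E'.
Qed.

Lemma good_inv a : good a -> good a^-1%g.
Proof. by move=> ga E EP; have [E' E'P ->] := good_onto ga EP; rewrite perm_imsetK. Qed.

Lemma good_mul a b : good a -> good b -> good (a * b)%g.
Proof.
move=> ga gb E EP.
rewrite (eq_in_imset (g := b \o a)); last by move=> x _; rewrite permM.
by rewrite imset_comp; apply: gb; apply: ga.
Qed.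

Definition pf (a : {perm X}) : {ffun X -> X} := [ffun x => a x].

Lemma good_S a : good a -> pf a \in Sigpart P.
Proof.
move=> ga; apply/(SP hP); split.
  move=> x y e; rewrite !ffunE.
  have H := ga _ (bl_mem hP x).
  rewrite (bl_eq hP H (imset_f a (mem_bl hP x))).
  by rewrite (bl_eq hP H (imset_f a (bl_same hP e))).
move=> C CP; have [c cC] := blockP hP CP; exists (a^-1%g c); by rewrite ffunE permKV.
Qed.

Lemma swap_exists A B : A \in P -> B \in P -> #|A| = #|B| ->
  exists t : {perm X}, [/\ good t, t @: A = B, t @: B = A &
     forall E, E \in P -> E != A -> E != B -> t @: E = E].
Proof.
move=> AP BP cAB.
case: (eqVneq A B) => [<-|ne].
  exists 1%g; split => //; try (move=> E _ _ _); try (move=> E EP);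
    rewrite (eq_in_imset (g := id)) ?imset_id // => x _; by rewrite perm1.
have [x0 _] := blockP hP AP.
have [be [binj bAB]] := inj_exists x0 (eq_leq cAB).
have bon : be @: A = B.
  apply/eqP; rewrite eqEcard (card_in_imset binj) cAB leqnn andbT.
  by apply/subsetP => y /imsetP [x xA ->]; apply: bAB.
have disj : forall x, x \in A -> x \in B -> False.
  by move=> x xA xB; move: ne; rewrite -(bl_eq hP AP xA) (bl_eq hP BP xB) eqxx.
pose be' y := odflt y [pick x in A | be x == y].
have be'P : forall y, y \in B -> be' y \in A /\ be (be' y) = y.
  move=> y yB; rewrite /be'; case: pickP => [x /andP [xA /eqP e]|H] //=.
  move: yB; rewrite -bon => /imsetP [x xA ey].
  by move: (H x); rewrite xA ey eqxx.
have be'K : forall x, x \in A -> be' (be x) = x.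
  move=> x xA; have [h1 h2] := be'P _ (bAB x xA); exact: binj h2.
pose f x := if x \in A then be x else if x \in B then be' x else x.
have fK : involutive f.
  move=> x; rewrite /f; case: (boolP (x \in A)) => xA.
    have bB := bAB x xA; case: ifP => [bA|_]; first by case: (disj _ bA bB).
    by rewrite bB be'K.
  case: (boolP (x \in B)) => xB; last by rewrite (negbTE xA) (negbTE xB).
  by have [h1 h2] := be'P _ xB; rewrite h1.
pose t := perm (inv_inj fK).
have tE : forall x, t x = f x by move=> x; rewrite permE.
have tA : t @: A = B.
  by rewrite -bon; apply: eq_in_imset => x xA; rewrite tE /f xA.
have tB : t @: B = A.
  rewrite -tA -imset_comp (eq_in_imset (g := id)) ?imset_id // => x _.
  by rewrite /= !tE fK.
have tE' : forall E, E \in P -> E != A -> E != B -> t @: E = E.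
  move=> E EP nA nB; rewrite (eq_in_imset (g := id)) ?imset_id // => x xE.
  rewrite tE /f; case: ifP => [xA|_].
    by move: nA; rewrite -(bl_eq hP EP xE) (bl_eq hP AP xA) eqxx.
  case: ifP => [xB|_] //.
  by move: nB; rewrite -(bl_eq hP EP xE) (bl_eq hP BP xB) eqxx.
exists t; split => // E EP.
case: (eqVneq E A) => [->|nA]; first by rewrite tA.
case: (eqVneq E B) => [->|nB]; first by rewrite tB.
by rewrite tE'.
Qed.

Lemma good_two Z Z' D1 D2 : Z \in P -> Z' \in P -> D1 \in P -> D2 \in P ->
  Z != Z' -> D1 != D2 -> #|Z| = #|D1| -> #|Z'| = #|D2| ->
  exists a : {perm X}, [/\ good a, a @: Z = D1 & a @: Z' = D2].
Proof.
move=> ZP Z'P D1P D2P nZ nD cZ cZ'.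
have [t1 [g1 t1Z t1D _]] := swap_exists ZP D1P cZ.
have Z1P : t1 @: Z' \in P by apply: g1.
have cZ1 : #|t1 @: Z'| = #|D2| by rewrite card_imset //; apply: perm_inj.
have [t2 [g2 t2Z t2D t2E]] := swap_exists Z1P D2P cZ1.
exists (t1 * t2)%g; split; first exact: good_mul.
- rewrite (eq_in_imset (g := t2 \o t1)); last by move=> x _; rewrite permM.
  have ne1 : D1 != t1 @: Z'.
    apply/eqP => e; move: nZ; rewrite -t1Z in e.
    by move/(imset_inj (@perm_inj _ t1)): e => ->; rewrite eqxx.
  by rewrite imset_comp t1Z t2E.
- rewrite (eq_in_imset (g := t2 \o t1)); last by move=> x _; rewrite permM.
  by rewrite imset_comp t2Z.
Qed.

End Swap.


Lemma inj_extend (T U : finType) (V V0 : {set T}) (Z : {set U}) (psi : T -> U) (u0 : U) :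
  V0 \subset V -> {in V0 &, injective psi} -> (forall v, v \in V0 -> psi v \in Z) ->
  #|V| <= #|Z| ->
  exists lam : T -> U, [/\ {in V &, injective lam}, forall v, v \in V -> lam v \in Z
                         & forall v, v \in V0 -> lam v = psi v].
Proof.
move=> sV pinj pZ cVZ.
have cD : #|V :\: V0| <= #|Z :\: psi @: V0|.
  rewrite !cardsD (setIidPr sV).
  have -> : Z :&: psi @: V0 = psi @: V0.
    by apply/setIidPr; apply/subsetP => z /imsetP [v vV ->]; apply: pZ.
  by rewrite (card_in_imset pinj) leq_sub2r.
have [i1 [i1inj i1Z]] := inj_exists u0 cD.
exists (fun v => if v \in V0 then psi v else i1 v); split.
- move=> x y xV yV; case: (boolP (x \in V0)) => xV0; case: (boolP (y \in V0)) => yV0.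
  + exact: pinj.
  + move=> e; have : i1 y \in Z :\: psi @: V0 by apply: i1Z; rewrite inE yV0.
    by rewrite inE -e imset_f.
  + move=> e; have : i1 x \in Z :\: psi @: V0 by apply: i1Z; rewrite inE xV0.
    by rewrite inE e imset_f.
  + by apply: i1inj; rewrite inE ?xV0 ?yV0.
- move=> v vV; case: ifP => [/pZ //|vV0].
  by have := i1Z v; rewrite !inE vV0 vV => /(_ isT) /andP [].
- by move=> v ->.
Qed.

Section Cycle.
Variable T : finType.
Variable P : {set T}.
Variable phi : T -> T.
Hypothesis phiP : forall x, x \in P -> phi x \in P.

Lemma iterP k x : x \in P -> iter k phi x \in P.
Proof. by elim: k => //= k IH xP; apply: phiP; apply: IH. Qed.

Lemma cycle_exists m : m \in P -> m \notin phi @: P ->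
  exists C Y' n, [/\ C \in P, 0 < n, iter n phi C = C, Y' \in P & phi Y' = C]
     /\ forall j, iter j phi C != Y'.
Proof.
move=> mP mnot.
pose g (k : 'I_(#|P|.+1)) := iter k phi m.
have : [exists i : 'I_(#|P|.+1), exists j : 'I_(#|P|.+1), (i < j) && (g i == g j)].
  apply: contraT => /existsPn H.
  have ginj : injective g.
    move=> i j e; apply/eqP; case: (ltngtP i j) => [lt|lt|/val_inj -> //].
    - by move: (H i) => /existsPn /(_ j); rewrite lt e eqxx.
    - by move: (H j) => /existsPn /(_ i); rewrite lt e eqxx.
  have : #|g @: [set: 'I_(#|P|.+1)]| <= #|P|.
    by apply: subset_leq_card; apply/subsetP => y /imsetP [k _ ->]; apply: iterP.
  by rewrite card_imset // cardsT card_ord ltnn.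
case/existsP => i /existsP [j /andP [lij /eqP eij]].
pose per k := [exists n : 'I_(#|P|.+1), (0 < n) && (iter n phi (iter k phi m) == iter k phi m)].
have perex : exists k, per k.
  exists i; apply/existsP.
  have lt : j - i < #|P|.+1 by apply: leq_ltn_trans (leq_subr _ _) (ltn_ord j).
  exists (Ordinal lt); rewrite /= subn_gt0 lij /=.
  by rewrite -iterD subnK ?(ltnW lij) // -/(g j) -eij.
case: (ex_minnP perex) => k0 per0 min0.
rewrite /per in per0.
case: k0 per0 min0 => [|k] per0 min0.
  case/existsP: per0 => n /andP [n0 /eqP e]; move: mnot; rewrite /= in e.
  by rewrite -e -(prednK n0) iterS (imset_f phi (iterP n.-1 mP)).
case/existsP: per0 => n /andP [n0 /eqP e].
exists (iter k.+1 phi m), (iter k phi m), n; split; first by split => //; apply: iterP.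
move=> j'; apply/eqP => e'.
have : per k.
  apply/existsP; exists n; rewrite n0 /= -e' -iterD addnC iterD e //.
by move/min0; rewrite ltnn.
Qed.

End Cycle.


Section Step.
Variable X : finType.
Variable P : {set {set X}}.
Hypothesis hP : partition P [set: X].
Local Notation bl := (bl P).
Local Notation inT := (inT P).
Local Notation surjB := (surjB P).
Local Notation bm := (bm P).

Variable g : {ffun X -> X}.
Hypothesis Tg : inT g.
Local Notation phi := (bm g).

Lemma phiP E : E \in P -> phi E \in P. Proof. exact: bm_mem. Qed.

Variables (C Y' : {set X}) (n : nat).
Hypotheses (CP : C \in P) (n0 : 0 < n) (Cn : iter n phi C = C) (Y'P : Y' \in P)
  (Y'C : phi Y' = C) (Y'nc : forall j, iter j phi C != Y').

Definition Y := iter n.-1 phi C.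
Definition Cy := [set iter j phi C | j : 'I_n].

Lemma iterCP j : iter j phi C \in P. Proof. exact: (@iterP _ P phi phiP j C CP). Qed.
Lemma YP : Y \in P. Proof. exact: iterCP. Qed.
Lemma YC : phi Y = C. Proof. by rewrite /Y -iterS prednK. Qed.
Lemma YCy : Y \in Cy.
Proof. have lt : n.-1 < n by rewrite prednK. by apply/imsetP; exists (Ordinal lt). Qed.
Lemma CCy : C \in Cy.
Proof. by apply/imsetP; exists (Ordinal n0). Qed.
Lemma Y'Cy : Y' \notin Cy.
Proof. by apply/imsetP => -[j _ e]; move: (Y'nc j); rewrite -e eqxx. Qed.
Lemma CyP E : E \in Cy -> E \in P.
Proof. by case/imsetP => j _ ->; apply: iterCP. Qed.
Lemma phiCy E : E \in Cy -> phi E \in Cy.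
Proof.
case/imsetP => j _ ->; rewrite -iterS.
case: (ltngtP j.+1 n) => [lt|lt|e].
- by apply/imsetP; exists (Ordinal lt).
- by move: (ltn_ord j); rewrite ltnNge -ltnS lt.
- by rewrite e Cn CCy.
Qed.
Lemma phiCy_onto : phi @: Cy = Cy.
Proof.
apply/eqP; rewrite eqEsubset; apply/andP; split.
  by apply/subsetP => E /imsetP [F FC ->]; apply: phiCy.
apply/subsetP => E /imsetP [j _ ->].
case: j => [[|j] lt] /=.
  by apply/imsetP; exists Y; [apply: YCy | rewrite YC].
apply/imsetP; exists (iter j phi C) => //.
by apply/imsetP; exists (Ordinal (ltnW lt)).
Qed.
Lemma phiCy_inj : {in Cy &, injective phi}.
Proof. by apply/imset_injP; rewrite phiCy_onto. Qed.

Definition pi E := if E \in Cy then phi E else E.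

Lemma piP E : E \in P -> pi E \in P.
Proof. by rewrite /pi; case: ifP => // _; apply: phiP. Qed.

Lemma pi_inj : {in P &, injective pi}.
Proof.
move=> E F EP FP; rewrite /pi.
case: (boolP (E \in Cy)) => EC; case: (boolP (F \in Cy)) => FC //.
- exact: phiCy_inj.
- by move=> e; move: FC; rewrite -e phiCy.
- by move=> e; move: EC; rewrite e phiCy.
Qed.

Lemma pi_onto : pi @: P = P.
Proof.
apply/eqP; rewrite eqEcard (card_in_imset pi_inj) leqnn andbT.
by apply/subsetP => F /imsetP [E EP ->]; apply: piP.
Qed.

Lemma pi_ontoP F : F \in P -> exists2 E, E \in P & F = pi E.
Proof. by rewrite -{1}pi_onto => /imsetP [E EP ->]; exists E. Qed.

Lemma piY : pi Y = C. Proof. by rewrite /pi YCy YC. Qed.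
Lemma piY' : pi Y' = Y'. Proof. by rewrite /pi (negbTE Y'Cy). Qed.
Lemma CY' : C != Y'. Proof. by apply: contraNneq Y'Cy => <-; apply: CCy. Qed.
Lemma YY' : Y != Y'. Proof. by apply: contraNneq Y'Cy => <-; apply: YCy. Qed.

Definition b := #|Y'| <= #|C|.
Definition Z := if b then C else Y'.
Definition Z' := if b then Y' else C.
Definition Yb := if b then Y else Y'.
Definition Ys := if b then Y' else Y.

Lemma ZP : Z \in P. Proof. by rewrite /Z; case: b. Qed.
Lemma Z'P : Z' \in P. Proof. by rewrite /Z'; case: b. Qed.
Lemma YbP : Yb \in P. Proof. by rewrite /Yb; case: b; rewrite ?YP. Qed.
Lemma YsP : Ys \in P. Proof. by rewrite /Ys; case: b; rewrite ?YP. Qed.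
Lemma piYb : pi Yb = Z. Proof. by rewrite /Yb /Z; case: b; rewrite ?piY ?piY'. Qed.
Lemma piYs : pi Ys = Z'. Proof. by rewrite /Ys /Z'; case: b; rewrite ?piY ?piY'. Qed.
Lemma ZZ' : Z != Z'. Proof. by rewrite /Z /Z'; case: b; rewrite ?CY' // eq_sym CY'. Qed.
Lemma YbYs : Yb != Ys. Proof. by rewrite /Yb /Ys; case: b; rewrite ?YY' // eq_sym YY'. Qed.
Lemma cZZ' : #|Z'| <= #|Z|.
Proof. rewrite /Z /Z'; case: (boolP b) => // /negP; rewrite /b => H.
by apply: ltnW; rewrite ltnNge; apply/negP. Qed.
Lemma YbYs_cases E : (E == Yb) || (E == Ys) = (E == Y) || (E == Y').
Proof. by rewrite /Yb /Ys; case: b => //; rewrite orbC. Qed.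


Definition r x := odflt x [pick y in bl x | g y == g x].
Lemma rP x : r x \in bl x /\ g (r x) = g x.
Proof.
rewrite /r; case: pickP => [y /andP [yb /eqP e]|H] //.
by split => //; apply: mem_bl.
Qed.
Lemma r_eq x x' : bl x = bl x' -> g x = g x' -> r x = r x'.
Proof.
move=> e1 e2; rewrite /r e1 e2; case: pickP => // H.
by move: (H x'); rewrite mem_bl // eqxx.
Qed.

Definition s0 x := if bl x \in Cy then g x else r x.
Lemma s0P x : s0 x \in pi (bl x).
Proof.
rewrite /s0 /pi; case: ifP => _; first by rewrite bm_bl // mem_bl.
by case: (rP x).
Qed.
Lemma s0_P2 x x' : bl x = bl x' -> s0 x = s0 x' -> g x = g x'.
Proof.
rewrite /s0 => e; rewrite e; case: ifP => // _ er.
by rewrite -(rP x).2 -(rP x').2 er.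
Qed.
Lemma s0_P3 x x' : bl x = bl x' -> g x = g x' -> s0 x = s0 x'.
Proof. by rewrite /s0 => e1 e2; rewrite e1 e2 (r_eq e1 e2). Qed.

Lemma bl_in x E : E \in P -> x \in E -> bl x = E.
Proof. exact: bl_eq. Qed.

Lemma gYY' x : x \in Y :|: Y' -> g x \in C.
Proof.
rewrite inE => /orP [] xY.
  by rewrite -YC (bmE hP Tg YP xY) mem_bl.
by rewrite -Y'C (bmE hP Tg Y'P xY) mem_bl.
Qed.

Variable c : {ffun X -> X}.
Hypotheses (cfix : forall x, x \notin Z' -> c x = x) (cZ : forall x, x \in Z' -> c x \in Z)
  (cinj : {in Z' &, injective c}).

Definition V := g @: (Y :|: Y').
Definition V0 := g @: Ys.
Definition pickYs v := odflt v [pick x in Ys | g x == v].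
Definition psi v := c (s0 (pickYs v)).

Lemma pickYsP x : x \in Ys -> pickYs (g x) \in Ys /\ g (pickYs (g x)) = g x.
Proof.
move=> xY; rewrite /pickYs; case: pickP => [y /andP [yY /eqP e]|H] //.
by move: (H x); rewrite xY eqxx.
Qed.

Lemma psi_g x : x \in Ys -> psi (g x) = c (s0 x).
Proof.
move=> xY; have [h1 h2] := pickYsP xY; rewrite /psi; congr (c _); apply: s0_P3 => //.
by rewrite (bl_in YsP h1) (bl_in YsP xY).
Qed.

Lemma s0Ys x : x \in Ys -> s0 x \in Z'.
Proof. by move=> xY; rewrite -piYs -(bl_in YsP xY) s0P. Qed.

Lemma psi_inj : {in V0 &, injective psi}.
Proof.
move=> v v' /imsetP [x xY ->] /imsetP [x' x'Y ->]; rewrite !psi_g //.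
move/cinj => e; have := e (s0Ys xY) (s0Ys x'Y).
by apply: s0_P2; rewrite (bl_in YsP xY) (bl_in YsP x'Y).
Qed.

Lemma psiZ v : v \in V0 -> psi v \in Z.
Proof. by case/imsetP => x xY ->; rewrite psi_g // cZ // s0Ys. Qed.

Lemma V0V : V0 \subset V.
Proof.
apply/subsetP => v /imsetP [x xY ->]; apply: imset_f.
by move: xY; rewrite /Ys !inE; case: b => ->; rewrite ?orbT.
Qed.

Lemma cVZ : #|V| <= #|Z|.
Proof.
have VC : #|V| <= #|C|.
  by apply: subset_leq_card; apply/subsetP => v /imsetP [x xY ->]; apply: gYY'.
rewrite /Z; case: (boolP b) => // /negP; rewrite /b => H.
by apply: leq_trans VC (ltnW _); rewrite ltnNge; apply/negP.
Qed.

Lemma lam_exists : exists lam : X -> X, [/\ {in V &, injective lam},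
  forall v, v \in V -> lam v \in Z & forall v, v \in V0 -> lam v = psi v].
Proof.
have [x0 _] := blockP hP CP.
by apply: (@inj_extend _ _ V V0 Z psi x0); [exact: V0V | exact: psi_inj | exact: psiZ | exact: cVZ].
Qed.


Variable lam : X -> X.
Hypotheses (laminj : {in V &, injective lam}) (lamZ : forall v, v \in V -> lam v \in Z)
  (lampsi : forall v, v \in V0 -> lam v = psi v).

Lemma YbYY' x : bl x = Yb -> x \in Y :|: Y'.
Proof. by move=> e; move: (mem_bl hP x); rewrite e /Yb !inE; case: b => ->; rewrite ?orbT. Qed.
Lemma YsYY' x : bl x = Ys -> x \in Y :|: Y'.
Proof. by move=> e; move: (mem_bl hP x); rewrite e /Ys !inE; case: b => ->; rewrite ?orbT. Qed.

Definition sf : {ffun X -> X} := [ffun x => if bl x == Yb then lam (g x) else s0 x].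

Lemma sfP x : sf x \in pi (bl x).
Proof.
rewrite ffunE; case: eqP => [e|_]; last exact: s0P.
by rewrite e piYb lamZ //; apply: imset_f; apply: YbYY'.
Qed.

Lemma bl_sf x : bl (sf x) = pi (bl x).
Proof. by apply: bl_in (sfP x); apply: piP; apply: bl_mem. Qed.

Lemma sfS : sf \in Sigpart P.
Proof.
apply/(SP hP); split; first by move=> x y e; rewrite !bl_sf e.
move=> D DP; have [E EP ->] := pi_ontoP DP; have [x xE] := blockP hP EP.
by exists x; rewrite -(bl_in EP xE) sfP.
Qed.

Definition kap B := if pi B == Z' then Z else pi B.

Lemma notin_blk x E : E \in P -> bl x != E -> x \notin E.
Proof. by move=> EP ne; apply: contra ne => xE; rewrite (bl_in EP xE). Qed.

Lemma bl_u x : bl (c (sf x)) = kap (bl x).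
Proof.
rewrite /kap; case: eqP => [e|ne].
  by apply: bl_in ZP _; apply: cZ; rewrite -e sfP.
rewrite cfix ?bl_sf //; apply: notin_blk Z'P _; rewrite bl_sf; exact/eqP.
Qed.

Lemma kap_cases B B' : B \in P -> B' \in P -> kap B = kap B' ->
  B = B' \/ (((B == Yb) || (B == Ys)) && ((B' == Yb) || (B' == Ys))).
Proof.
move=> BP B'P; rewrite /kap.
case: (eqVneq (pi B) Z') => e1; case: (eqVneq (pi B') Z') => e2 e.
- by left; apply: pi_inj => //; rewrite e1 e2.
- right; rewrite -piYs in e1; rewrite -piYb in e.
  by rewrite (pi_inj BP YsP e1) -(pi_inj YbP B'P e) !eqxx orbT.
- right; rewrite -piYs in e2; rewrite -piYb in e.
  by rewrite (pi_inj B'P YsP e2) (pi_inj BP YbP e) !eqxx orbT.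
- by left; apply: pi_inj.
Qed.

Lemma gV x : (bl x == Yb) || (bl x == Ys) -> g x \in V.
Proof. by case/orP => /eqP e; apply: imset_f; [apply: YbYY' | apply: YsYY']. Qed.

Lemma u_YY x : (bl x == Yb) || (bl x == Ys) -> c (sf x) = lam (g x).
Proof.
move=> H; rewrite ffunE; case: (eqVneq (bl x) Yb) => [e|ne].
  rewrite cfix //; apply: notin_blk Z'P _.
  by rewrite (bl_in ZP (lamZ (gV H))) ZZ'.
move: H; rewrite (negbTE ne) /= => /eqP e.
have xY : x \in Ys by rewrite -e mem_bl.
by rewrite -psi_g // lampsi //; apply: imset_f.
Qed.

Lemma K x x' : c (sf x) = c (sf x') -> g x = g x'.
Proof.
move=> e; have := congr1 bl e; rewrite !bl_u => ek.
case: (kap_cases (bl_mem hP x) (bl_mem hP x') ek).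
- move=> eb.
  case: (boolP ((bl x == Yb) || (bl x == Ys))) => H.
    have H' : (bl x' == Yb) || (bl x' == Ys) by rewrite -eb.
    by apply: laminj; rewrite ?gV // -!u_YY.
  move: e; rewrite !ffunE -eb; move: H; case/norP => n1 n2.
  rewrite (negbTE n1) => e; apply: (s0_P2 eb).
  have nZ' : forall y, bl y = bl x -> s0 y \notin Z'.
    move=> y ey; apply: notin_blk Z'P _.
    rewrite (bl_in (piP (bl_mem hP y)) (s0P y)) -piYs ey.
    by apply: contra n2 => /eqP /(pi_inj (bl_mem hP x) YsP) ->.
  by rewrite -(cfix (nZ' x erefl)) -(cfix (nZ' x' (esym eb))).
- by case/andP => h1 h2; apply: laminj; rewrite ?gV // -!u_YY.
Qed.

Lemma BK x x' : bl (c (sf x)) = bl (c (sf x')) -> bl (g x) = bl (g x').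
Proof.
rewrite !bl_u => ek.
case: (kap_cases (bl_mem hP x) (bl_mem hP x') ek).
  by apply: Tg.
case/andP => h1 h2.
have h1' : x \in Y :|: Y' by case/orP: h1 => /eqP e; [apply: YbYY' | apply: YsYY'].
have h2' : x' \in Y :|: Y' by case/orP: h2 => /eqP e; [apply: YbYY' | apply: YsYY'].
by rewrite (bl_in CP (gYY' h1')) (bl_in CP (gYY' h2')).
Qed.

Lemma kap_neq B : kap B != Z'.
Proof. by rewrite /kap; case: (eqVneq (pi B) Z') => [_|ne] //; apply: ZZ'. Qed.

Lemma hit_D D : D \in P -> D != Z' -> exists x, bl (c (sf x)) = D.
Proof.
move=> DP ne; have [E EP eD] := pi_ontoP DP; have [x xE] := blockP hP EP.
exists x; rewrite bl_u (bl_in EP xE) /kap -eD (negbTE ne) //.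
Qed.

Variable m0 : X.
Hypothesis m0nh : forall x, bl (g x) != bl m0.

Definition hf : {ffun X -> X} := [ffun y =>
  if [pick x | c (sf x) == y] is Some x then g x
  else if bl y == Z' then m0
  else if [pick x | bl (c (sf x)) == bl y] is Some x then g x else y].

Lemma hf_u x : hf (c (sf x)) = g x.
Proof.
rewrite ffunE; case: pickP => [x' /eqP e|H]; first exact: K.
by move: (H x); rewrite eqxx.
Qed.

Lemma hf_Z' y : bl y = Z' -> hf y = m0.
Proof.
move=> e; rewrite ffunE; case: pickP => [x /eqP ex|_]; last by rewrite e eqxx.
by move: (kap_neq (bl x)); rewrite -bl_u ex e eqxx.
Qed.

Lemma hf_bl y : bl y != Z' -> exists x, bl (c (sf x)) = bl y /\ hf y = g x.
Proof.
move=> ne; rewrite ffunE; case: pickP => [x /eqP ex|_]; first by exists x; rewrite ex.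
rewrite (negbTE ne); case: pickP => [x /eqP ex|H]; first by exists x.
have [x ex] := hit_D (bl_mem hP y) ne; by move: (H x); rewrite ex eqxx.
Qed.

Lemma hfT : inT hf.
Proof.
move=> y y' e; case: (eqVneq (bl y) Z') => ez.
  by rewrite !hf_Z' // -e.
have ez' : bl y' != Z' by rewrite -e.
have [x [ex ->]] := hf_bl ez; have [x' [ex' ->]] := hf_bl ez'.
by apply: BK; rewrite ex ex'.
Qed.

Lemma g_fact : g = fcomp (fcomp sf c) hf.
Proof. by apply/ffunP => x; rewrite !fcompE hf_u. Qed.


Definition hit (f : X -> X) := [set B in P | [exists x, f x \in B]].

Lemma hitP (f : X -> X) B : reflect (B \in P /\ exists x, f x \in B) (B \in hit f).
Proof.
rewrite inE; apply: (iffP andP) => -[h1 h2]; split => //; first exact/existsP.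
by apply/existsP.
Qed.

Lemma hit_lt : #|hit g| < #|hit hf|.
Proof.
apply: proper_card; rewrite properE; apply/andP; split.
  apply/subsetP => B /hitP [BP [x gx]]; apply/hitP; split => //.
  by exists (c (sf x)); rewrite hf_u.
apply/subsetPn; exists (bl m0).
  have [y yZ] := blockP hP Z'P.
  apply/hitP; split; first exact: bl_mem.
  by exists y; rewrite hf_Z' ?(bl_in Z'P yZ) // mem_bl.
apply/negP => /hitP [_ [x gx]].
by move: (m0nh x); rewrite (bl_in (bl_mem hP m0) gx) eqxx.
Qed.

End Step.


Lemma conj_props (X : finType) (a : {perm X}) (Z Z' D1 D2 : {set X}) (i : X -> X) :
  a @: Z = D1 -> a @: Z' = D2 -> (forall x, x \in D2 -> i x \in D1) -> {in D2 &, injective i} ->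
  let c := fcomp (fcomp (pf a) (mrg D2 i)) (pf a^-1%g) in
  [/\ forall x, x \notin Z' -> c x = x, forall x, x \in Z' -> c x \in Z & {in Z' &, injective c}].
Proof.
move=> aZ aZ' iD iinj c.
have cE x : c x = a^-1%g (if a x \in D2 then i (a x) else a x).
  by rewrite /c !fcompE !ffunE.
split.
- move=> x xZ; rewrite cE -aZ' mem_imset ?(negbTE xZ) ?permK //; exact: perm_inj.
- move=> x xZ; rewrite cE -aZ' mem_imset ?xZ //; last exact: perm_inj.
  have : i (a x) \in a @: Z by rewrite aZ iD // -aZ' imset_f.
  by case/imsetP => y yZ ->; rewrite permK.
- move=> x y xZ yZ; rewrite !cE -aZ' !mem_imset ?xZ ?yZ; try exact: perm_inj.
  move/perm_inj/iinj => e; apply: perm_inj; apply: e; by rewrite -aZ' imset_f.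
Qed.

Section UB.
Variable X : finType.
Variable P : {set {set X}}.
Hypothesis hP : partition P [set: X].
Variable W : {set {ffun X -> X}}.
Local Notation gen := (gen_sg (Sigpart P :|: W)).

Hypothesis Hm : forall Z Z', Z \in P -> Z' \in P -> Z != Z' -> #|Z'| <= #|Z| ->
  exists c, [/\ gen c, forall x, x \notin Z' -> c x = x, forall x, x \in Z' -> c x \in Z
             & {in Z' &, injective c}].

Lemma UB_step (g : {ffun X -> X}) : inT P g -> (forall h : {ffun X -> X}, inT P h -> #|hit P g| < #|hit P h| -> gen h) -> gen g.
Proof.
move=> Tg IH.
case: (boolP (P \subset hit P g)) => sub.
  apply: gen_base; rewrite inE; apply/orP; left; apply/(SP hP); split => // B BP.
  by have /hitP [_ ] := subsetP sub B BP.
case/subsetPn: sub => m mP mnh.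
have mnot : m \notin bm P g @: P.
  apply/negP => /imsetP [F FP em]; apply: (negP mnh); apply/hitP; split => //.
  have [x xF] := blockP hP FP; exists x; rewrite em; exact: in_bm.
have [C [Y' [n [[CP n0 Cn Y'P Y'C] Y'nc]]]] :=
  cycle_exists (fun E EP => bm_mem hP Tg EP) mP mnot.
have [c [cgen cfix cZ cinj]] := Hm (ZP CP Y'P) (Z'P CP Y'P)
   (ZZ' (P := P) (g := g) n0 Y'nc) (cZZ' C Y').
have [lam [linj lZ lpsi]] := lam_exists hP Tg CP n0 Cn Y'P Y'C Y'nc cZ cinj.
have [m0 m0m] := blockP hP mP.
have m0nh : forall x, bl P (g x) != bl P m0.
  move=> x; rewrite (bl_eq hP mP m0m); apply/eqP => e; apply: (negP mnh).
  by apply/hitP; split => //; exists x; rewrite -e mem_bl.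
rewrite (g_fact hP Tg CP n0 Cn Y'P Y'nc cfix cZ linj lZ lpsi m0).
apply: gen_comp; first apply: gen_comp => //.
  by apply: gen_base; rewrite inE (sfS hP Tg n0 Cn Y'nc lZ).
apply: IH; first exact: (hfT hP Tg CP n0 Cn Y'P Y'C Y'nc cfix cZ lZ).
exact: (hit_lt hP Tg CP n0 Cn Y'P Y'nc cfix cZ linj lZ lpsi m0nh).
Qed.

Theorem UB g : g \in Tpart P -> gen g.
Proof.
move=> /(TP hP) Tg.
have hitP_sub : forall h, hit P h \subset P.
  by move=> h; apply/subsetP => B /hitP [].
suff H : forall k (g : {ffun X -> X}), #|P| - #|hit P g| <= k -> inT P g -> gen g.
  exact: (H _ g (leqnn _)).
elim=> [|k IHk] g' hk Tg'; apply: UB_step => // h Th lt.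
  have := subset_leq_card (hitP_sub h); have := subset_leq_card (hitP_sub g'); lia.
apply: IHk => //.
have := subset_leq_card (hitP_sub h); have := subset_leq_card (hitP_sub g'); lia.
Qed.

End UB.


Lemma card_le_rel (T U : finType) (A : {set T}) (B : {set U}) (Rel : T -> U -> Prop) :
  (forall a, a \in A -> exists2 b, b \in B & Rel a b) ->
  (forall a a' b, a \in A -> a' \in A -> b \in B -> Rel a b -> Rel a' b -> a = a') ->
  #|A| <= #|B|.
Proof.
move=> tot uni.
case: (set_0Vmem A) => [->|[a0 a0A]]; first by rewrite cards0.
have [b0 _ _] := tot a0 a0A.
pose f a := epsilon (inhabits b0) (fun b => a \in A -> b \in B /\ Rel a b).
have fP : forall a, a \in A -> f a \in B /\ Rel a (f a).
  move=> a aA; apply: (epsilon_spec (inhabits b0) (fun b => a \in A -> b \in B /\ Rel a b)) => //.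
  by have [b bB r] := tot a aA; exists b.
have finj : {in A &, injective f}.
  move=> a a' aA a'A e; have [h1 h2] := fP a aA; have [h1' h2'] := fP a' a'A.
  by apply: (uni a a' (f a)) => //; rewrite e.
rewrite -(card_in_imset finj); apply: subset_leq_card.
by apply/subsetP => b /imsetP [a aA ->]; case: (fP a aA).
Qed.

Section Final.
Variable X : finType.
Variable P : {set {set X}}.
Hypothesis hP : partition P [set: X].

Definition M := #|X|.+1.
Definition Rb (ab : 'I_M * 'I_M) : bool := (ab.2 <= ab.1) &&
  [exists D : {set X} * {set X}, [&& D.1 \in P, D.2 \in P, D.1 != D.2,
        #|D.1| == ab.1 & #|D.2| == ab.2]].
Definition R := [set ab | Rb ab].

Definition cinj (D2 D1 : {set X}) x := nth x (enum D1) (index x (enum D2)).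
Lemma cinjP (D2 D1 : {set X}) : #|D2| <= #|D1| ->
  {in D2 &, injective (cinj D2 D1)} /\ forall x, x \in D2 -> cinj D2 D1 x \in D1.
Proof.
move=> le.
have lt x : x \in D2 -> index x (enum D2) < size (enum D1).
  move=> xA; apply: leq_trans (_ : size (enum D2) <= _); first by rewrite index_mem mem_enum.
  by rewrite -!cardE.
split.
- move=> x y xA yA; rewrite /cinj.
  have ex : nth x (enum D1) (index y (enum D2)) = nth y (enum D1) (index y (enum D2)).
    by apply: set_nth_default; apply: lt.
  rewrite -ex => /eqP; rewrite nth_uniq ?lt ?enum_uniq // => /eqP e.
  by rewrite -(nth_index x (_ : x \in enum D2)) ?mem_enum // e nth_index ?mem_enum.
- by move=> x xA; rewrite -mem_enum mem_nth ?lt.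
Qed.

Definition pr (ab : 'I_M * 'I_M) := [pick D : {set X} * {set X} | [&& D.1 \in P, D.2 \in P,
   D.1 != D.2, #|D.1| == ab.1 & #|D.2| == ab.2]].
Definition wof ab := if pr ab is Some D then mrg D.2 (cinj D.2 D.1) else idf X.
Definition W0 := wof @: R.

Lemma wofP ab : ab \in R -> exists D1 D2,
  [/\ D1 \in P, D2 \in P, D1 != D2, #|D1| = ab.1 & #|D2| = ab.2] /\
  wof ab = mrg D2 (cinj D2 D1).
Proof.
rewrite inE => /andP [le ex]; rewrite /wof /pr; case: pickP => [D|H].
  case/and5P => h1 h2 h3 /eqP h4 /eqP h5; by exists D.1, D.2.
by case/existsP: ex => D; rewrite H.
Qed.

Lemma wof_typ ab : ab \in R -> typ P (wof ab) ab.1 ab.2.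
Proof.
move=> abR; have [D1 [D2 [[h1 h2 h3 h4 h5] ->]]] := wofP abR.
have le : #|D2| <= #|D1| by rewrite h4 h5; move: abR; rewrite inE => /andP [].
have [ci cD] := cinjP le.
by rewrite -h4 -h5; apply: typ_mrg.
Qed.

Lemma pair_eq (ab ab' : 'I_M * 'I_M) : ab.2 <= ab.1 -> ab'.2 <= ab'.1 ->
  ((ab.1 = ab'.1 :> nat) /\ ab.2 = ab'.2 :> nat) \/ ((ab.1 = ab'.2 :> nat) /\ ab.2 = ab'.1 :> nat) ->
  ab = ab'.
Proof.
case: ab => a b; case: ab' => a' b' /= le le' H.
have [e1 e2] : a = a' :> nat /\ b = b' :> nat.
  case: H => [//|[e1 e2]]; split; lia.
by rewrite (val_inj e1) (val_inj e2).
Qed.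

Lemma Rle ab : ab \in R -> ab.2 <= ab.1.
Proof. by rewrite inE => /andP []. Qed.

Lemma wof_inj : {in R &, injective wof}.
Proof.
move=> ab ab' abR ab'R e; apply: pair_eq; rewrite ?Rle //.
by apply: (typ_uniq (wof_typ abR)); rewrite e; apply: wof_typ.
Qed.

Lemma W0T : W0 \subset Tpart P.
Proof.
apply/subsetP => w /imsetP [ab abR ->]; apply/(TP hP).
have [D1 [D2 [[h1 h2 h3 h4 h5] ->]]] := wofP abR.
have le : #|D2| <= #|D1| by rewrite h4 h5; apply: Rle.
have [ci cD] := cinjP le.
exact: (mrgT hP h1 h2 cD).
Qed.

Lemma TcompP' (f g : {ffun X -> X}) : f \in Tpart P -> g \in Tpart P -> fcomp f g \in Tpart P.
Proof. exact: TcompP. Qed.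

Lemma gen_T (W : {set {ffun X -> X}}) g : W \subset Tpart P -> gen_sg (Sigpart P :|: W) g -> g \in Tpart P.
Proof.
move=> WT; apply: gen_sub; last exact: TcompP'.
move=> f; rewrite inE => /orP [|/(subsetP WT) //].
by rewrite inE => /andP [].
Qed.

Lemma size_lt (B : {set X}) : #|B| < M.
Proof. by rewrite ltnS max_card. Qed.

Lemma W0gen : generates (Tpart P) (Sigpart P) W0.
Proof.
move=> g; split; first exact: gen_T W0T.
apply: UB => // Z Z' ZP Z'P ne le.
pose ab := (Ordinal (size_lt Z), Ordinal (size_lt Z')).
have abR : ab \in R.
  rewrite inE /Rb /= le /=; apply/existsP; exists (Z, Z'); by rewrite /= ZP Z'P ne !eqxx.
have [D1 [D2 [[h1 h2 h3 h4 h5] ew]]] := wofP abR.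
have le' : #|D2| <= #|D1| by rewrite h4 h5.
have [ci cD] := cinjP le'.
have [a [ga aZ aZ']] := good_two hP ZP Z'P h1 h2 ne h3 (esym h4) (esym h5).
have [c1 c2 c3] := conj_props aZ aZ' cD ci.
exists (fcomp (fcomp (pf a) (mrg D2 (cinj D2 D1))) (pf a^-1%g)); split => //.
apply: gen_comp; first apply: gen_comp.
- by apply: gen_base; rewrite inE good_S.
- by apply: gen_base; rewrite inE -ew imset_f ?orbT.
- by apply: gen_base; rewrite inE good_S //; apply: good_inv.
Qed.

Lemma LBcount (W : {set {ffun X -> X}}) : W \subset Tpart P ->
  generates (Tpart P) (Sigpart P) W -> #|R| <= #|W|.
Proof.
move=> WT gW.
apply: (@card_le_rel _ _ R W (fun ab w => typ P w ab.1 ab.2)).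
  move=> ab abR; have [D1 [D2 [[h1 h2 h3 h4 h5] _]]] := wofP abR.
  have le' : #|D2| <= #|D1| by rewrite h4 h5; apply: Rle.
  have [ci cD] := cinjP le'.
  have mT : mrg D2 (cinj D2 D1) \in Tpart P by apply/(TP hP); apply: (mrgT hP h1 h2 cD).
  have [w wW tw] := LB hP h1 h2 h3 ci cD WT ((gW _).2 mT).
  by exists w => //; rewrite -h4 -h5.
move=> ab ab' w abR ab'R _ t1 t2; apply: pair_eq; rewrite ?Rle //.
exact: typ_uniq t1 t2.
Qed.

Theorem rr : relative_rank_is (Tpart P) (Sigpart P) #|R|.
Proof.
split; last by move=> W WT gW; apply: LBcount.
exists W0; split; first exact: W0T; split; first exact: W0gen.
by rewrite card_in_imset //; apply: wof_inj.
Qed.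

End Final.


Lemma cardK (m : nat) (Kszs : seq nat) : uniq Kszs -> all (fun x => x < m.+1) Kszs ->
  #|[set a : 'I_m.+1 | val a \in Kszs]| = size Kszs.
Proof.
move=> uK aK.
have uK' : uniq [seq (inord x : 'I_m.+1) | x <- Kszs].
  rewrite map_inj_in_uniq // => x y xK yK e.
  by rewrite -(inordK (allP aK x xK)) e inordK //; apply: (allP aK).
rewrite -(size_map (fun x => (inord x : 'I_m.+1))) -(card_uniqP uK').
apply: eq_card => a; rewrite inE; apply/idP/mapP.
  by move=> aK'; exists (val a) => //; rewrite inord_val.
by case=> x xK ->; rewrite /= inordK //; apply: (allP aK).
Qed.

Lemma bin2_sq k : 'C(k, 2) * 2 + k = k * k.
Proof. elim: k => // k IH; rewrite binS bin1; lia. Qed.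

Section Count.
Variable X : finType.
Variable P : {set {set X}}.
Hypothesis hP : partition P [set: X].
Variables (p q t : nat) (ns ms ls : seq nat).
Hypotheses (sn : size ns = p) (sm : size ms = p) (sl : size ls = q)
  (un : uniq ns) (ul : uniq ls)
  (an : all (fun n => 2 <= n) ns) (am : all (fun m => 2 <= m) ms) (al : all (fun l => 2 <= l) ls)
  (dl : all (fun l => l \notin ns) ls)
  (hn : forall i, i < p -> nblocks P (nth 0 ns i) = nth 0 ms i)
  (hl : forall j, j < q -> nblocks P (nth 0 ls j) = 1)
  (ht : nblocks P 1 = t)
  (hB : forall B, B \in P -> [|| #|B| == 1, #|B| \in ns | #|B| \in ls]).

Lemma nb_ns a : a \in ns -> 2 <= nblocks P a.
Proof.
move=> aN; have lt : index a ns < p by rewrite -sn index_mem.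
rewrite -{1}(nth_index 0 aN) hn //; apply: (allP am); apply: mem_nth; by rewrite sm.
Qed.

Lemma nb_ls a : a \in ls -> nblocks P a = 1.
Proof.
move=> aL; have lt : index a ls < q by rewrite -sl index_mem.
by rewrite -(nth_index 0 aL) hl.
Qed.

Lemma nb_pos a : (0 < nblocks P a) = [exists B in P, #|B| == a].
Proof.
apply/card_gt0P/exists_inP.
  by case=> B; rewrite inE => /andP [h1 h2]; exists B.
by case=> B h1 h2; exists B; rewrite inE h1 h2.
Qed.

Definition Kszs := ns ++ ls ++ (if 0 < t then [:: 1] else [::]).
Definition Kszs2 := ns ++ (if 1 < t then [:: 1] else [::]).

Lemma n1 : 1 \notin ns. Proof. by apply/negP => /(allP an). Qed.
Lemma l1 : 1 \notin ls. Proof. by apply/negP => /(allP al). Qed.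

Lemma memK a : (a \in Kszs) = (0 < nblocks P a).
Proof.
rewrite /Kszs !mem_cat; apply/idP/idP.
  case/or3P => [aN|aL|].
  - by apply: leq_trans (nb_ns aN).
  - by rewrite nb_ls.
  - by case: ifP; rewrite ?inE // -ht => h /eqP ->.
rewrite nb_pos => /exists_inP [B BP /eqP <-].
case/or3P: (hB BP) => [/eqP e|->|->]; rewrite ?orbT //.
have : 0 < t by rewrite -ht nb_pos; apply/exists_inP; exists B; rewrite ?e.
by move=> ->; rewrite e inE eqxx !orbT.
Qed.

Lemma memK2 a : (a \in Kszs2) = (1 < nblocks P a).
Proof.
rewrite /Kszs2 mem_cat; apply/idP/idP.
  case/orP => [aN|]; first exact: nb_ns.
  by case: ifP; rewrite ?inE // -ht => h /eqP ->.
move=> H.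
have : a \in Kszs by rewrite memK; apply: leq_trans H.
rewrite /Kszs !mem_cat => /or3P [->//|aL|].
  by move: H; rewrite nb_ls.
case: ifP; rewrite ?inE // => _ /eqP e; move: H; rewrite e ht => ->.
by rewrite inE eqxx orbT.
Qed.

Lemma uK : uniq Kszs.
Proof.
rewrite /Kszs !cat_uniq un ul /=; apply/and3P; split.
- apply/hasPn => x; rewrite mem_cat => /orP [xL|]; first exact: (allP dl).
  by case: ifP; rewrite ?inE // => _ /eqP ->; apply: n1.
- by case: ifP => //= _; rewrite orbF l1.
- by case: ifP.
Qed.

Lemma uK2 : uniq Kszs2.
Proof.
rewrite /Kszs2 cat_uniq un /=; apply/andP; split; last by case: ifP.
apply/hasPn => x; case: ifP; rewrite ?inE // => _ /eqP ->; exact: n1.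
Qed.

Lemma small a : 0 < nblocks P a -> a < M X.
Proof. by rewrite nb_pos => /exists_inP [B _ /eqP <-]; apply: size_lt. Qed.

Definition S := [set a : 'I_(M X) | 0 < nblocks P a].

Lemma cardS : #|S| = size Kszs.
Proof.
rewrite /M -(cardK (m := #|X|) uK).
  by apply: eq_card => a; rewrite !inE memK.
by apply/allP => x; rewrite memK; apply: small.
Qed.

Lemma cardS2 : #|[set a : 'I_(M X) | 1 < nblocks P a]| = size Kszs2.
Proof.
rewrite /M -(cardK (m := #|X|) uK2).
  by apply: eq_card => a; rewrite !inE memK2.
by apply/allP => x; rewrite memK2 => H; apply: small; apply: leq_trans H.
Qed.


Local Notation MM := (M X).
Local Notation Sp := S.

Lemma Rchar (ab : 'I_MM * 'I_MM) : (ab \in R P) =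
  ((ab.2 < ab.1) && (ab.1 \in Sp) && (ab.2 \in Sp)) || ((ab.1 == ab.2) && (1 < nblocks P ab.1)).
Proof.
case: ab => a b /=; rewrite inE /Rb /= !inE !nb_pos.
apply/idP/idP.
  case/andP => le /existsP [[D1 D2] /and5P [/= h1 h2 h3 /eqP h4 /eqP h5]].
  case: (ltngtP b a) => [lt|lt|e].
  - rewrite ?lt /=; apply/orP; left; apply/andP; split; apply/exists_inP.
      by exists D1; rewrite ?h4.
    by exists D2; rewrite ?h5.
  - by move: le; rewrite leqNgt lt.
  - apply/orP; right; rewrite (val_inj e) eqxx /=; apply/card_gt1P.
    by exists D1, D2; rewrite !inE h1 h2 h4 h5 e !eqxx.
case/orP => [/andP [/andP [lt /exists_inP [B1 B1P /eqP e1]] /exists_inP [B2 B2P /eqP e2]]|].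
  rewrite (ltnW lt) /=; apply/existsP; exists (B1, B2); rewrite /= B1P B2P e1 e2 !eqxx !andbT /=.
  by apply/eqP => e; move: lt; rewrite -e1 -e2 e ltnn.
case/andP => /eqP e /card_gt1P [D1 [D2 [h1 h2 h3]]].
move: h1 h2; rewrite !inE => /andP [h1 /eqP h4] /andP [h2 /eqP h5].
rewrite -e leqnn /=; apply/existsP; exists (D1, D2); by rewrite /= h1 h2 h3 h4 h5 e !eqxx.
Qed.

Definition R1 := [set ab : 'I_MM * 'I_MM | (ab.2 < ab.1) && (ab.1 \in Sp) && (ab.2 \in Sp)].
Definition R2 := [set ab : 'I_MM * 'I_MM | (ab.1 == ab.2) && (1 < nblocks P ab.1)].

Lemma cardR : #|R P| = #|R1| + #|R2|.
Proof.
have -> : R P = R1 :|: R2 by apply/setP => ab; rewrite Rchar !inE.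
rewrite cardsU; have -> : R1 :&: R2 = set0.
  apply/setP => -[a b]; rewrite !inE /=; apply/negP => /andP [/andP [/andP [lt _] _] /andP [/eqP e _]].
  by move: lt; rewrite e ltnn.
by rewrite cards0 subn0.
Qed.

Definition dg (a : 'I_MM) := (a, a).
Lemma dg_inj : injective dg. Proof. by move=> a b [->]. Qed.

Lemma cardR2 : #|R2| = #|[set a : 'I_MM | 1 < nblocks P a]|.
Proof.
rewrite -(card_imset _ dg_inj); apply: eq_card => -[a b]; rewrite !inE /=.
apply/idP/idP.
  case/andP => /eqP e h; apply/imsetP; exists a; first by rewrite inE.
  by rewrite /dg e.
by case/imsetP => c; rewrite inE => h [-> ->]; rewrite eqxx.
Qed.

Definition sw (ab : 'I_MM * 'I_MM) := (ab.2, ab.1).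
Lemma swK : involutive sw. Proof. by case. Qed.

Lemma cardR1 : #|R1| = 'C(#|Sp|, 2).
Proof.
pose A := setX Sp Sp.
pose B1 := [set ab : 'I_MM * 'I_MM | ab.2 < ab.1].
pose B2 := [set ab : 'I_MM * 'I_MM | ab.1 < ab.2].
have e1 : A :&: B1 = R1.
  by apply/setP => -[a b]; rewrite !inE /= andbC andbA.
have e2 : #|(A :\: B1) :&: B2| = #|R1|.
  rewrite -(card_imset _ (inv_inj swK)); apply: eq_card => -[a b].
  rewrite (can2_imset_pre _ swK swK) !inE /= -leqNgt.
  apply/idP/idP.
    by case/andP => /andP [_ /andP [h1 h2]] lt; rewrite lt h1 h2.
  by case/andP => /andP [lt h2] h1; rewrite lt h1 h2 (ltnW lt).
have e3 : #|(A :\: B1) :\: B2| = #|Sp|.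
  rewrite -(card_imset _ dg_inj); apply: eq_card => -[a b]; rewrite !inE /= -!leqNgt.
  apply/idP/idP.
    case/andP => le1 /andP [le2 /andP [h1 h2]].
    have e : a = b by apply: val_inj; apply/eqP; rewrite eqn_leq le1 le2.
    by apply/imsetP; exists a; [rewrite inE | rewrite /dg e].
  by case/imsetP => c; rewrite inE => cS [-> ->]; rewrite leqnn cS.
have : #|A| = #|R1| + (#|R1| + #|Sp|).
  by rewrite -{1}e1 -e2 -e3 !cardsID.
rewrite cardsX => h; have := bin2_sq #|Sp|; lia.
Qed.

Lemma count_final : #|R P| = 'C(p + q, 2) + p + hfun p q t.
Proof.
rewrite cardR cardR1 cardR2 cardS2 cardS /Kszs /Kszs2 !size_cat sn sl.
case: t => [|[|t']] /=; rewrite ?addn0 ?addn1.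
- by [].
- by rewrite addnS binS bin1; lia.
- by rewrite [p + q.+1]addnS binS bin1; lia.
Qed.

End Count.


Theorem corollary3p4 (X : finType) (P : {set {set X}})
  (p q t : nat) (ns ms ls : seq nat) :
  0 < #|X| ->
  partition P [set: X] ->
  size ns = p -> size ms = p -> size ls = q ->
  uniq ns -> uniq ls ->
  all (fun n => 2 <= n) ns -> all (fun m => 2 <= m) ms -> all (fun l => 2 <= l) ls ->
  all (fun l => l \notin ns) ls ->
  (forall i, i < p -> nblocks P (nth 0 ns i) = nth 0 ms i) ->
  (forall j, j < q -> nblocks P (nth 0 ls j) = 1) ->
  nblocks P 1 = t ->
  (forall B, B \in P -> [|| #|B| == 1, #|B| \in ns | #|B| \in ls]) ->
  relative_rank_is (Tpart P) (Sigpart P) ('C(p + q, 2) + p + hfun p q t).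
Proof.
move=> _ hP sn sm sl un ul an am al dl hn hl ht hB.
rewrite -(count_final hP sn sm sl un ul an am al dl hn hl ht hB).
exact: rr hP.
Qed.
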